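(* Let $R$ be a strict triangular $\mathcal{B}$-module algebra. Symmetric functions are quasi-symmetric: there is a canonical inclusion $\mathrm{Sym}_\infty(R)\subset\mathrm{QSym}(R)$ inside $R[[x_1,x_2,\ldots]]$.
   Context: All rings graded, power series implicitly completed. $\mathcal{B}=\mathbb{Z}\langle\phi_1,\phi_2,\ldots\rangle$ ($\phi_0=1$) is the Brouder–Frabetti–Krattenthaler Hopf algebra. A $\mathcal{B}$-module algebra $R$ is a ring with left $\mathcal{B}$-action satisfying $\phi(ab)=\sum\phi'(a)\phi''(b)$; $T=R[[x]]$ is the free left $R$-module on $x^k$ with product extending $R$'s and $xr=\sum_k\phi_k(r)x^{1+k}$. A triangular structure is an $R$-bilinear involution $\Upsilon$ of $T\otimes_RT$ satisfying the Yang–Baxter equation and compatible with multiplication and unit (as in braided Hopf algebras), given by a commutation rule $yx=\sum_{i,j\ge0}\Upsilon_{i,j}x^{1+i}y^{1+j}$ in $T\otimes_RT=R[[x,y]]$; strict means $\Upsilon_{0,0}=1$, $\Upsilon_{k,0}=0$ ($k\ge1$). It makes $R[[x_1,x_2,\ldots]]$ (limit of $T^{\otimes_Rn}$) an algebra with $x_jr=\sum\phi_k(r)x_j^{1+k}$ and $x_lx_k=\sum\Upsilon_{i,j}x_k^{1+i}x_l^{1+j}$ for $l>k$, and symmetric groups act with adjacent transpositions acting by $\Upsilon$; $\mathrm{Sym}_\infty(R)$ is the ring of invariant (symmetric) functions. For a composition $I=(i_1,\ldots,i_n)$ put $m_I=\sum_{k_1<\cdots<k_n}x_{k_1}^{i_1}\cdots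 x_{k_n}^{i_n}$; $\mathrm{QSym}(R)$ is the (completed) left $R$-module spanned freely by the $m_I$, a subalgebra of $R[[x_1,x_2,\ldots]]$. *)

(* Defs.v *)
From HB Require Import structures.
From mathcomp Require Import all_boot all_order all_algebra.
Set Implicit Arguments. Unset Strict Implicit. Unset Printing Implicit Defensive.
Import GRing.Theory.
Local Open Scope ring_scope.

(*  - A power series in one variable over R is a coefficient family         *)
(*    nat -> R  (left coefficients: sum_a G a * x^a).                       *)
(*  - T (x) T = R[[x,y]] : nat -> nat -> R, G a b is the left coefficient   *)
(*    of x^a (x) x^b = x^a y^b.   T^(3) : nat -> nat -> nat -> R.           *)
(*  - R[[x_1,x_2,...]] : seq nat -> R, the coefficient of the normal        *)
(*    monomial x_1^(e_0) x_2^(e_1) ... ; trailing zeros in e are irrelevant *)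
(*    (we always read coefficients through [canon]).                        *)
(*  - phi : nat -> R -> R is the action of phi_0, phi_1, ... of B.          *)
(*  - A left-R-linear continuous map Upsilon of T (x)_R T is given by its   *)
(*    matrix U: Upsilon(x^a (x) x^b) = sum_{p,q} U a b p q x^p (x) x^q,     *)
(*    together with a modulus of continuity Ubd (for each target (p,q)     *)
(*    only sources a,b < Ubd p q contribute), which makes all the           *)
(*    (completed) sums below finite.                                       *)

Section Defs.
Variable R : pzRingType.

(* (phi^m)_j = sum_{i_1+...+i_m = j} phi_{i_1} o ... o phi_{i_m} in B *)
Fixpoint phiw (phi : nat -> R -> R) (m j : nat) (s : R) : R :=
  match m with
  | 0 => if j == 0%N then s else 0
  | m'.+1 => \sum_(i < j.+1) phi i (phiw phi m' (j - i) s)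
  end.

(* B-module algebra: phi_0 acts as the identity, each phi_k is additive,
   phi(rs) = sum phi'(r) phi''(s) with the BFK coproduct
   Delta(phi_n) = sum_k phi_k (x) (phi^(k+1))_(n-k)  (the convention forced
   by  x r = sum_k phi_k(r) x^(1+k)  making T associative),
   and phi(1) = eps(phi) 1. *)
Definition B_module_algebra (phi : nat -> R -> R) : Prop :=
  [/\ forall r, phi 0%N r = r,
      forall k, {morph phi k : u v / u + v},
      forall n r s, phi n (r * s) =
          \sum_(k < n.+1) phi k r * phiw phi k.+1 (n - k) s
    & forall n, (0 < n)%N -> phi n 1 = 0].

(* coefficient of x^t in x^a r  (in T = R[[x]]) *)
Fixpoint xmul (phi : nat -> R -> R) (a : nat) (r : R) (t : nat) : R :=
  match a with
  | 0 => if t == 0%N then r else 0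
  | a'.+1 => \sum_(m < t) phi (t - m.+1)%N (xmul phi a' r m)
  end.

(* coefficient of x_1^(h_0)...x_n^(h_(n-1)) in x_1^(g_0)...x_n^(g_(n-1)) r *)
Fixpoint xmulv (phi : nat -> R -> R) (g : seq nat) (r : R) (h : seq nat) : R :=
  match g, h with
  | [::], [::] => r
  | a :: g', t :: h' => xmul phi a (xmulv phi g' r h') t
  | _, _ => 0
  end.

Variables (phi : nat -> R -> R) (U : nat -> nat -> nat -> nat -> R)
          (Ubd : nat -> nat -> nat).

Definition Ups (G : nat -> nat -> R) (p q : nat) : R :=
  \sum_(a < Ubd p q) \sum_(b < Ubd p q) G a b * U a b p q.

Definition rmul2 (G : nat -> nat -> R) (r : R) (p q : nat) : R :=
  \sum_(s < p.+1) \sum_(t < q.+1) G s t * xmulv phi [:: (s : nat); (t : nat)] r [:: p; q].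

Definition Y12 (F : nat -> nat -> nat -> R) (p q c : nat) : R :=
  \sum_(a < Ubd p q) \sum_(b < Ubd p q) F a b c * U a b p q.
Definition Y23 (F : nat -> nat -> nat -> R) (p q r : nat) : R :=
  \sum_(a < p.+1) \sum_(b < Ubd q r) \sum_(c < Ubd q r)
     F a b c * xmul phi a (U b c q r) p.

Definition mu12 (F : nat -> nat -> nat -> R) (n c : nat) : R :=
  \sum_(a < n.+1) F a (n - a)%N c.
Definition mu23 (F : nat -> nat -> nat -> R) (a n : nat) : R :=
  \sum_(b < n.+1) F a b (n - b)%N.

Definition unitL (G : nat -> R) (a b : nat) : R := if a == 0%N then G b else 0.
Definition unitR (G : nat -> R) (a b : nat) : R := if b == 0%N then G a else 0.

Definition triangular_structure : Prop :=
  (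
      (forall a b p q, U a b p q != 0 -> (a < Ubd p q)%N && (b < Ubd p q)%N) /\
      (* R-bilinear (left linearity is built into the matrix form) *)
      (forall G r p q, Ups (rmul2 G r) p q = rmul2 (Ups G) r p q) /\
      (forall G p q, Ups (Ups G) p q = G p q) /\
      (forall F p q r, Y12 (Y23 (Y12 F)) p q r = Y23 (Y12 (Y23 F)) p q r) /\
      ((forall F p q, Ups (mu12 F) p q = mu23 (Y12 (Y23 F)) p q) /\
      (forall F p q, Ups (mu23 F) p q = mu12 (Y23 (Y12 F)) p q)) /\
      ((forall G p q, Ups (unitL G) p q = unitR G p q) /\
      (forall G p q, Ups (unitR G) p q = unitL G p q)) /\ (* given by a commutation rule  yx = sum Ups_{ij} x^(1+i) y^(1+j) *)
      (forall p q, (p == 0%N) || (q == 0%N) -> U 1 1 p q = 0)).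

(* Ups_{i,j} := coefficient of x^(1+i) y^(1+j) in yx *)
Definition Upsij (i j : nat) : R := U 1 1 i.+1 j.+1.

Definition strict_triangular : Prop :=
  triangular_structure /\
  (Upsij 0 0 = 1 /\ forall k, (0 < k)%N -> Upsij k 0 = 0).

Fixpoint canon (e : seq nat) : seq nat :=
  match e with
  | [::] => [::]
  | a :: e' => let c := canon e' in
               if (a == 0%N) && (c == [::]) then [::] else a :: c
  end.

Definition coef (f : seq nat -> R) (e : seq nat) : R := f (canon e).

Fixpoint box (h : seq nat) : seq (seq nat) :=
  match h with
  | [::] => [:: [::]]
  | c :: h' => flatten [seq [seq j :: g | g <- box h'] | j <- iota 0 c.+1]
  end.

(* action of the adjacent transposition s_(i+1) (exchanging the variables
   x_(i+1), x_(i+2)) by Upsilon on the factors i+1, i+2 *)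
Definition sact (i : nat) (f : seq nat -> R) (h : seq nat) : R :=
  let hh := h ++ nseq i.+2 0%N in
  let lo := take i hh in
  let p := nth 0%N hh i in
  let q := nth 0%N hh i.+1 in
  let hi := drop i.+2 hh in
  \sum_(g <- box lo) \sum_(a < Ubd p q) \sum_(b < Ubd p q)
     coef f (g ++ (a : nat) :: (b : nat) :: hi) * xmulv phi g (U a b p q) lo.

(* Sym_infty(R): invariant under the whole S_infty, i.e. under all the
   adjacent transpositions generating it *)
Definition in_Sym (f : seq nat -> R) : Prop :=
  forall i e, coef (sact i f) e = coef f e.

Fixpoint compsF (fuel n : nat) : seq (seq nat) :=
  match fuel with
  | 0 => if n == 0%N then [:: [::]] else [::]
  | fuel'.+1 => if n == 0%N then [:: [::]] else
      flatten [seq [seq k :: J | J <- compsF fuel' (n - k)] | k <- iota 1 n]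
  end.
Definition comps (n : nat) : seq (seq nat) := compsF n n.

(* m_I = sum_{k_1<...<k_n} x_{k_1}^{i_1} ... x_{k_n}^{i_n} *)
Definition mono (J : seq nat) (e : seq nat) : R :=
  if [seq a <- e | a != 0%N] == J then 1 else 0.

(* sum_I c_I m_I  (completed; m_I is homogeneous of degree |I|, so only
   compositions of the degree of e contribute to the coefficient of x^e) *)
Definition qsym_comb (c : seq nat -> R) (e : seq nat) : R :=
  \sum_(J <- comps (sumn e)) c J * mono J e.

Definition in_QSym (f : seq nat -> R) : Prop :=
  exists c : seq nat -> R, forall e, coef f e = coef (qsym_comb c) e.

End Defs.

(* Main.v *)
Require Import Defs.
From mathcomp Require Import all_boot all_order all_algebra zify.
Set Implicit Arguments. Unset Strict Implicit. Unset Printing Implicit Defensive.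
Import GRing.Theory.
Local Open Scope ring_scope.

Section Gen.
Variable R : pzRingType.

Lemma sum1_delta N k (F : nat -> R) :
  \sum_(i < N) (if (i : nat) == k then F i else 0) = if (k < N)%N then F k else 0.
Proof.
case: ltnP => h.
  rewrite (bigD1 (Ordinal h)) //= eqxx big1 ?addr0 // => i /negbTE.
  by rewrite -val_eqE /= => ->.
by rewrite big1 // => i _; case: eqP => // E; move: (ltn_ord i); rewrite E ltnNge h.
Qed.

Lemma sum2_delta N a0 b0 (H : nat -> nat -> R) :
  (H a0 b0 != 0 -> (a0 < N)%N && (b0 < N)%N) ->
  \sum_(a < N) \sum_(b < N) (if ((a : nat) == a0) && ((b : nat) == b0) then 1 else 0) * H a b
  = H a0 b0.
Proof.
move=> hH.
transitivity (\sum_(a < N) (if (a : nat) == a0 then (if (b0 < N)%N then H a0 b0 else 0) else 0)).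
  apply: eq_bigr => a _; case: eqP => [->|_] /=.
    rewrite -sum1_delta; apply: eq_bigr => b _; case: eqP => _; by rewrite ?mul1r ?mul0r.
  by rewrite big1 // => b _; rewrite mul0r.
rewrite (@sum1_delta N a0 (fun _ => if (b0 < N)%N then H a0 b0 else 0)).
case: (boolP ((a0 < N)%N && (b0 < N)%N)) => [/andP[-> ->] //|hn].
have -> : H a0 b0 = 0 by apply/eqP; apply: contraR hn.
by case: ifP => //; case: ifP.
Qed.

Lemma sum_ind (T : eqType) (l : seq T) (F : T -> R) y :
  \sum_(x <- l) F x * (if x == y then 1 else 0) = F y *+ count (pred1 y) l.
Proof.
elim: l => [|x l IH]; first by rewrite big_nil.
rewrite big_cons IH /=; case: eqP => [->|_]; by rewrite ?mulr1 ?mulr0 ?add0r ?mulrS.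
Qed.

Lemma count_flat_cons (s : seq nat) (L : nat -> seq (seq nat)) c h :
  count (pred1 (c :: h)) (flatten [seq [seq j :: g | g <- L j] | j <- s])
  = (count (pred1 c) s * count (pred1 h) (L c))%N.
Proof.
elim: s => [|j s IH] //=; rewrite count_cat IH count_map mulnDl; congr (_ + _)%N.
case: eqVneq => [->|ne]; rewrite ?mul1n ?mul0n.
  by apply: eq_count => g /=; rewrite eqseq_cons eqxx.
rewrite (eq_count (a2 := pred0)) ?count_pred0 // => g /=.
by rewrite eqseq_cons (negbTE ne).
Qed.

Lemma count_box (h : seq nat) : count (pred1 h) (box h) = 1%N.
Proof.
elim: h => [|c h IH] //.
have -> : box (c :: h) = flatten [seq [seq j :: g | g <- box h] | j <- iota 0 c.+1] by [].
rewrite (count_flat_cons _ (fun _ => box h)) IH muln1.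
rewrite count_uniq_mem ?iota_uniq // mem_iota.
by rewrite add0n ltnSn.
Qed.

Lemma count_comps fuel (s : seq nat) :
  all (fun x => 0 < x)%N s -> (sumn s <= fuel)%N ->
  count (pred1 s) (compsF fuel (sumn s)) = 1%N.
Proof.
elim: fuel s => [|fuel IH] [|x s] //.
- by rewrite /= => /andP[x0 _]; move: x0; clear; lia.
- move=> /andP[x0 As] le.
  have -> : compsF fuel.+1 (sumn (x :: s)) = flatten [seq [seq k :: J | J <- compsF fuel (sumn (x :: s) - k)] | k <- iota 1 (sumn (x :: s))].
    rewrite /= ifF //; apply/eqP; move: x0; clear; lia.
  rewrite /=.
  rewrite (count_flat_cons _ (fun k => compsF fuel (x + sumn s - k))) count_uniq_mem ?iota_uniq // mem_iota x0 /=.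
have -> : (x < 1 + (x + sumn s))%N by rewrite add1n ltnS leq_addr.
  rewrite mul1n addKn IH //.
  move: le x0; rewrite /=; clear; lia.
Qed.
End Gen.

Lemma canon_nseq0 k : canon (nseq k 0%N) = [::].
Proof. by elim: k => //= k ->. Qed.

Lemma canon_cat0 X k : canon (X ++ nseq k 0%N) = canon X.
Proof. elim: X => [|x X IH] /=; [exact: canon_nseq0 | by rewrite IH]. Qed.

Lemma canon_pad e : exists k, e = canon e ++ nseq k 0%N.
Proof.
elim: e => [|a e [k Ek]]; first by exists 0%N.
rewrite /=; case: eqP => [a0|_] /=; last by exists k; rewrite -Ek.
case: eqP => [c0|_] /=; last by exists k; rewrite -Ek.
by exists k.+1; rewrite a0 Ek c0.
Qed.

Lemma filter_canon e : [seq x <- canon e | x != 0%N] = [seq x <- e | x != 0%N].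
Proof.
have [k Ek] := canon_pad e; rewrite {2}Ek filter_cat filter_nseq /=.
by rewrite cats0.
Qed.

Lemma sumn_canon e : sumn (canon e) = sumn e.
Proof.
have [k Ek] := canon_pad e; rewrite {2}Ek sumn_cat.
by clear Ek; elim: k => [|k IH] /=; rewrite ?addn0 // add0n.
Qed.

Lemma sumn_filter e : sumn [seq x <- e | x != 0%N] = sumn e.
Proof. by elim: e => //= x e IH; case: eqP => [->|_] /=; rewrite IH. Qed.

Lemma all_filter e : all (fun x => 0 < x)%N [seq x <- e | x != 0%N].
Proof. by elim: e => //= x e IH; case: eqP => [->|/eqP] //=; rewrite lt0n => ->. Qed.

Lemma pad_facts (hh Z Y : seq nat) n : (n.+2 <= size hh)%N -> hh ++ Z = Y ->
  [/\ take n hh = take n Y, nth 0%N hh n = nth 0%N Y n,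
      nth 0%N hh n.+1 = nth 0%N Y n.+1 & drop n.+2 hh ++ Z = drop n.+2 Y].
Proof.
move=> hs <-; split.
- by rewrite take_cat ifT //; move: hs; clear; lia.
- by rewrite nth_cat ifT //; move: hs; clear; lia.
- by rewrite nth_cat ifT //; move: hs; clear; lia.
- rewrite -{2}(cat_take_drop n.+2 hh) -catA drop_size_cat //.
  rewrite size_take; case: ifP => // /negbT; move: hs; clear; lia.
Qed.

Section Main.
Variable R : pzRingType.
Variables (phi : nat -> R -> R) (U : nat -> nat -> nat -> nat -> R)
          (Ubd : nat -> nat -> nat).
Hypothesis HB : B_module_algebra phi.
Hypothesis HT : triangular_structure phi U Ubd.

Lemma phi_0 k : phi k 0 = 0.
Proof.
case: HB => _ Hadd _ _.
have h := Hadd k 0 0; rewrite addr0 in h.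
by apply: (@addrI _ (phi k 0)); rewrite addr0 -h.
Qed.

Lemma xmul0 a t : xmul phi a 0 t = 0.
Proof.
elim: a t => [|a IH] t /=; first by case: eqP.
by rewrite big1 // => m _; rewrite IH phi_0.
Qed.

Lemma xmul1 a t : xmul phi a 1 t = if a == t then 1 else 0.
Proof.
case: HB => phi0 _ _ phi1.
elim: a t => [|a IH] t /=; first by rewrite eq_sym.
transitivity (\sum_(m < t) (if (m : nat) == a then phi (t - a.+1) 1 else 0)).
  apply: eq_bigr => m _; rewrite IH eq_sym; case: eqP => [->|_] //.
  by rewrite phi_0.
rewrite (@sum1_delta _ t a (fun _ => phi (t - a.+1) 1)); case: ltnP => h.
  case E: (t - a.+1)%N => [|n].
    by rewrite phi0 ifT //; apply/eqP; move: h E; clear; lia.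
  by rewrite phi1 // ifF //; apply/negbTE/eqP; move: E; clear; lia.
by rewrite ifF //; apply/negbTE/eqP; move: h; clear; lia.
Qed.

Lemma xmulv0 g h : xmulv phi g 0 h = 0.
Proof. by elim: g h => [|a g IH] [|t h] //=; rewrite IH xmul0. Qed.

Lemma xmulv1 g h : xmulv phi g 1 h = if g == h then 1 else 0.
Proof.
elim: g h => [|a g IH] [|t h] //=; rewrite IH eqseq_cons.
by case: (g == h); rewrite ?xmul1 ?andbT ?andbF ?xmul0.
Qed.

Lemma Ucont a b p q : U a b p q != 0 -> (a < Ubd p q)%N && (b < Ubd p q)%N.
Proof. by case: HT => H _; apply: H. Qed.

Lemma U0b b p : U 0 b p 0 = if p == b then 1 else 0.
Proof.
case: HT => _ [_ [_ [_ [_ [[HuL _] _]]]]].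
have := HuL (fun x => if x == b then 1 else 0) p 0%N.
rewrite /unitR /= => <-; rewrite /Ups.
rewrite -(@sum2_delta _ (Ubd p 0) 0 b (fun x y => U x y p 0)); last exact: Ucont.
apply: eq_bigr => x _; apply: eq_bigr => y _; rewrite /unitL.
by case: eqP => _; case: eqP => _; rewrite ?mul0r ?mul1r.
Qed.

Lemma Ua0 a p : (0 < a)%N -> U a 0 p 0 = 0.
Proof.
move=> ha; case: HT => _ [_ [_ [_ [_ [[_ HuR] _]]]]].
have := HuR (fun x => if x == a then 1 else 0) p 0%N.
rewrite /unitL /=.
have -> : (0%N == a) = false by apply/negbTE/eqP; move: ha; clear; lia.
rewrite if_same => E.
have S := @sum2_delta _ (Ubd p 0) a 0 (fun x y => U x y p 0) (@Ucont a 0 p 0).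
transitivity (Ups U Ubd (unitR (fun x : nat => if x == a then 1 else 0)) p 0); last exact: E.
rewrite -{}S /Ups.
apply: eq_bigr => x _; apply: eq_bigr => y _; rewrite /unitR /=.
by case: eqP => _; case: eqP => _; rewrite ?mul0r ?mul1r.
Qed.

Definition F3 (a0 b0 c0 : nat) (x y z : nat) : R :=
  if (x == a0) && (y == b0) && (z == c0) then 1 else 0.

Lemma mu23F b0 x n :
  mu23 (F3 1 1 b0) x n = if (x == 1%N) && (n == b0.+1) then 1 else 0.
Proof.
rewrite /mu23 /F3.
transitivity (\sum_(y < n.+1) (if (y : nat) == 1%N then
   (if (x == 1%N) && (n - 1 == b0)%N then 1 else 0 : R) else 0)).
  apply: eq_bigr => y _; case: (eqVneq (y : nat) 1%N) => [->|ne]; first by rewrite /= andbT.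
  by rewrite andbF.
rewrite (@sum1_delta _ n.+1 1 (fun _ => if (x == 1%N) && (n - 1 == b0)%N then 1 else 0 : R)).
by case: n => [|n] //=; rewrite ?andbF // subn1 /= eqSS.
Qed.

Lemma mu12F a0 b n c :
  mu12 (F3 1 a0 b) n c = if (n == a0.+1) && (c == b) then 1 else 0.
Proof.
rewrite /mu12 /F3.
transitivity (\sum_(y < n.+1) (if (y : nat) == 1%N then
   (if (n - 1 == a0)%N && (c == b) then 1 else 0 : R) else 0)).
  apply: eq_bigr => y _; case: (eqVneq (y : nat) 1%N) => [->|ne]; first by [].
  by [].
rewrite (@sum1_delta _ n.+1 1 (fun _ => if (n - 1 == a0)%N && (c == b) then 1 else 0 : R)).
by case: n => [|n] //=; rewrite subn1 /= eqSS.
Qed.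

Lemma Ugt b a p : (0 < a)%N -> U a b p 0 = 0.
Proof.
case: HT => _ [_ [_ [_ [[Hm12 Hm23] [_ HU11]]]]].
elim: b a p => [|b0 IHb] a p ha; first exact: Ua0.
elim: a ha p => [|a IHa] // _ p.
case: a IHa => [|a] IHa.
  have S := @sum2_delta _ (Ubd p 0) 1 b0.+1 (fun x y => U x y p 0) (@Ucont 1 b0.+1 p 0).
  rewrite -{}S.
  transitivity (Ups U Ubd (mu23 (F3 1 1 b0)) p 0).
    by rewrite /Ups; apply: eq_bigr => x _; apply: eq_bigr => y _; rewrite mu23F.
  rewrite Hm23 /mu12 big1 // => k _.
  rewrite /Y23 big1 // => x _; rewrite big1 // => y _; rewrite big1 // => z _.
  case: (eqVneq (z : nat) b0) => [ez|nz].
    case: (posnP y) => [y0|ypos].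
      rewrite [Y12 _ _ _ _ _ _](_ : _ = 0) ?mul0r //.
      rewrite /Y12 big1 // => x1 _; rewrite big1 // => y1 _; rewrite /F3.
      case: ifP => [/andP[/andP[/eqP -> /eqP ->] _]|_]; last by rewrite mul0r.
      by rewrite HU11 ?mulr0 // y0 eqxx orbT.
    by rewrite ez IHb // xmul0 mulr0.
  rewrite [Y12 _ _ _ _ _ _](_ : _ = 0) ?mul0r //.
  rewrite /Y12 big1 // => x1 _; rewrite big1 // => y1 _; rewrite /F3.
  by rewrite (negbTE nz) andbF mul0r.
have S := @sum2_delta _ (Ubd p 0) a.+2 b0.+1 (fun x y => U x y p 0) (@Ucont a.+2 b0.+1 p 0).
rewrite -{}S.
transitivity (Ups U Ubd (mu12 (F3 1 a.+1 b0.+1)) p 0).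
  by rewrite /Ups; apply: eq_bigr => x _; apply: eq_bigr => y _; rewrite mu12F.
rewrite Hm12 /mu23 big1 // => k _.
rewrite /Y12 big1 // => x _; rewrite big1 // => y _.
rewrite [Y23 _ _ _ _ _ _ _](_ : _ = 0) ?mul0r //.
rewrite /Y23 big1 // => a1 _; rewrite big1 // => b1 _; rewrite big1 // => c1 _.
rewrite /F3; case: ifP => [/andP[/andP[_ /eqP ->] /eqP ->]|_]; last by rewrite mul0r.
by rewrite IHa // xmul0 mulr0.
Qed.

Lemma Uval x y a : U x y a 0 = if (x == 0%N) && (y == a) then 1 else 0.
Proof.
case: x => [|x]; first by rewrite U0b eq_sym.
by rewrite Ugt.
Qed.

Lemma sactE i (f : seq nat -> R) h : sact phi U Ubd i f h =
  let hh := h ++ nseq i.+2 0%N in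
  \sum_(g <- box (take i hh))
   \sum_(a < Ubd (nth 0%N hh i) (nth 0%N hh i.+1))
   \sum_(b < Ubd (nth 0%N hh i) (nth 0%N hh i.+1))
     coef f (g ++ (a : nat) :: (b : nat) :: drop i.+2 hh) *
     xmulv phi g (U a b (nth 0%N hh i) (nth 0%N hh i.+1)) (take i hh).
Proof. by []. Qed.

Lemma swap (f : seq nat -> R) : in_Sym phi U Ubd f ->
  forall lo a hi, coef f (lo ++ a :: 0%N :: hi) = coef f (lo ++ 0%N :: a :: hi).
Proof.
move=> Hsym lo a hi.
rewrite -(Hsym (size lo)) {1}/coef sactE /=.
set e := lo ++ a :: 0%N :: hi.
set hh := canon e ++ nseq (size lo).+2 0%N.
have [k Ek] := canon_pad e.
have Ehh : hh ++ nseq k 0%N = lo ++ a :: 0%N :: (hi ++ nseq (size lo).+2 0%N).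
  by rewrite /hh -catA -nseqD addnC nseqD catA -Ek /e -catA.
have hs : ((size lo).+2 <= size hh)%N by rewrite /hh size_cat size_nseq leq_addl.
have [Ht Hn1 Hn2 Hd] := pad_facts hs Ehh.
rewrite Ht Hn1 Hn2 take_size_cat // nth_cat ltnn subnn /=.
rewrite nth_cat ltnNge leqnSn /= subSnn /=.
have Hd' : drop (size lo).+2 hh ++ nseq k 0%N = hi ++ nseq (size lo).+2 0%N.
  rewrite Hd drop_cat ifF; last by apply/negbTE; rewrite -leqNgt; apply: leqW; apply: leqnSn.
  have -> : ((size lo).+2 - size lo = 2)%N by clear; lia.
  by rewrite /= drop0.
transitivity (\sum_(g <- box lo) coef f (g ++ 0%N :: a :: hi) * (if g == lo then 1 else 0)).
  apply: eq_bigr => g _.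
  transitivity (\sum_(x < Ubd a 0) \sum_(y < Ubd a 0)
     (if ((x : nat) == 0%N) && ((y : nat) == a) then 1 else 0) *
       (coef f (g ++ (x : nat) :: (y : nat) :: hi) * xmulv phi g 1 lo)).
    apply: eq_bigr => x _; apply: eq_bigr => y _.
    have -> : coef f (g ++ (x : nat) :: (y : nat) :: drop (size lo).+2 hh)
            = coef f (g ++ (x : nat) :: (y : nat) :: hi).
      rewrite /coef -(canon_cat0 _ k) -catA /= Hd'.
      by rewrite -(canon_cat0 (g ++ [:: (x : nat), (y : nat) & hi]) (size lo).+2) -catA.
    rewrite Uval; case: ifP => _; first by rewrite mul1r.
    by rewrite xmulv0 mulr0 mul0r.
  rewrite (@sum2_delta _ (Ubd a 0) 0 a
     (fun x y => coef f (g ++ x :: y :: hi) * xmulv phi g 1 lo)) ?xmulv1 //.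
  move=> hne; apply: Ucont; rewrite U0b eqxx; apply/eqP => h10; move/eqP: hne; apply.
  by rewrite -[LHS]mulr1 h10 mulr0.
by rewrite sum_ind count_box.
Qed.

Lemma move0 (f : seq nat -> R) : in_Sym phi U Ubd f ->
  forall t lo, coef f (lo ++ 0%N :: t) = coef f (lo ++ t).
Proof.
move=> Hsym.
suff H : forall t lo, coef f (lo ++ 0%N :: t) = coef f (lo ++ t ++ [:: 0%N]).
  by move=> t lo; rewrite H catA /coef (canon_cat0 _ 1).
elim=> [|x t IH] lo //.
rewrite -(swap Hsym) -cat_rcons IH cat_rcons //.
Qed.

Lemma coef_filter (f : seq nat -> R) : in_Sym phi U Ubd f ->
  forall e lo, coef f (lo ++ e) = coef f (lo ++ [seq x <- e | x != 0%N]).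
Proof.
move=> Hsym; elim=> [|x e IH] lo //=.
case: eqP => [->|_] /=; first by rewrite (move0 Hsym) IH.
by rewrite -!cat_rcons IH.
Qed.
End Main.

Theorem mainTheorem10 (R : pzRingType) (phi : nat -> R -> R)
    (U : nat -> nat -> nat -> nat -> R) (Ubd : nat -> nat -> nat) :
  B_module_algebra phi ->
  strict_triangular phi U Ubd ->
  forall f : seq nat -> R, in_Sym phi U Ubd f -> in_QSym f.
Proof.
move=> HB [HT _] f Hsym.
exists (fun J => coef f J) => e.
rewrite {2}/coef /qsym_comb.
set s := [seq x <- e | x != 0%N].
transitivity (\sum_(J <- comps (sumn (canon e))) coef f J * (if J == s then 1 else 0)).
  rewrite sum_ind /comps sumn_canon -(sumn_filter e) count_comps ?all_filter //.
  by rewrite -(coef_filter HB HT Hsym e [::]).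
apply: eq_bigr => J _; rewrite /mono filter_canon eq_sym //.
Qed.
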